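(* Let $n$ be a positive integer, $0\le m\le\lfloor n/2\rfloor$ and $0\le k\le m$. Let $T_k$ be the Young tableau of shape $(n-k,k)$ whose first row contains $1,\dots,n-k$ and whose second row contains $n-k+1,\dots,n$, and let $R(T_k)\subseteq S_n$ be its row subgroup (permutations of $\{1,\dots,n\}$ preserving each row as a set). Let $\Omega=\{n-m+1,\dots,n\}$ and $\Omega_1=\{n-m+1,\dots,n-k\}$. Given subsets $V\subseteq\{1,\dots,k\}$ and $W\subseteq\Omega_1$, the number of $p\in R(T_k)$ such that $$W=\{\,i\in\Omega\mid p(i)\notin\Omega\cup V\,\}$$ equals $$\binom{n-m-\#V}{\#W}(\#W)!\,\binom{m-k+\#V}{m-k-\#W}(m-k-\#W)!\,k!\,(n-m)!\,.$$
   Context: $\#X$ denotes the cardinality of a finite set $X$. *)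

(* Defs.v *)
(* Elements 1..n of the paper are encoded as i : 'I_n with
   paper value (val i).+1. *)
From mathcomp Require Import all_boot all_fingroup.
Set Implicit Arguments. Unset Strict Implicit. Unset Printing Implicit Defensive.

Definition row1 (n k : nat) : {set 'I_n} := [set i : 'I_n | (val i).+1 <= n - k].
Definition row2 (n k : nat) : {set 'I_n} := [set i : 'I_n | n - k + 1 <= (val i).+1].

Definition rowgroup (n k : nat) : {set 'S_n} :=
  [set p : 'S_n | (p @: row1 n k == row1 n k) && (p @: row2 n k == row2 n k)].

Definition Omega (n m : nat) : {set 'I_n} := [set i : 'I_n | n - m + 1 <= (val i).+1].
Definition Omega1 (n m k : nat) : {set 'I_n} :=
  [set i : 'I_n | (n - m + 1 <= (val i).+1) && ((val i).+1 <= n - k)].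
Definition firstk (n k : nat) : {set 'I_n} := [set i : 'I_n | 1 <= (val i).+1 <= k].

(* Main.v *)
Require Import Defs.
From mathcomp Require Import all_boot all_fingroup zify.
Set Implicit Arguments. Unset Strict Implicit. Unset Printing Implicit Defensive.

Lemma card_fibers (A B : finType) (X : {set A}) (Y : {set B}) (phi : A -> B) c :
  (forall a, a \in X -> phi a \in Y) ->
  (forall b, b \in Y -> #|[set a in X | phi a == b]| = c) -> #|X| = c * #|Y|.
Proof.
move=> HXY Hc.
rewrite -sum1_card (partition_big phi (mem Y)) //=.
rewrite mulnC -sum_nat_const; apply: eq_bigr => b Hb.
by rewrite -(Hc b Hb) -sum1_card; apply: eq_bigl => a; rewrite inE.
Qed.

Section N.
Variable T : finType.
Variable S : T -> {set T}.

Definition N (s : seq T) : {set {ffun T -> T}} :=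
  [set f : {ffun T -> T} | [forall z, (z \notin s) ==> (f z == z)]
     && uniq (map f s) && all (fun z => f z \in S z) s].

Definition upd (g : {ffun T -> T}) x y : {ffun T -> T} :=
  [ffun z => if z == x then y else g z].

Lemma Nnil : #|N [::]| = 1.
Proof.
have -> : N [::] = [set [ffun z => z]].
  apply/setP => f; rewrite !inE /= !andbT; apply/forallP/eqP.
    by move=> H; apply/ffunP => z; rewrite ffunE; apply/eqP; apply: H.
  by move=> -> z; rewrite ffunE.
by rewrite cards1.
Qed.

Lemma N_cons x s (Q : {set T}) (P : pred T) :
  x \notin s -> S x = Q ->
  (forall z, z \in s -> P z -> S z \subset Q) ->
  (forall z, z \in s -> ~~ P z -> [disjoint S z & Q]) ->
  #|N (x :: s)| = (#|Q| - count P s) * #|N s|.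
Proof.
move=> xs SxQ HP HnP.
apply: (card_fibers (phi := fun f => upd f x x)).
  move=> f; rewrite !inE /= => /andP[/andP[/forallP Hf /andP[fxs us]] /andP[fx As]].
  apply/andP; split; [apply/andP; split|].
  - apply/forallP => z; apply/implyP => zs; rewrite ffunE.
    case: (eqVneq z x) => [->//|zx]; have := Hf z; rewrite inE negb_or zx zs /=.
    by move=> /eqP->.
  - suff -> : map (upd f x x) s = map f s by [].
    apply/eq_in_map => z zs; rewrite ffunE.
    by case: (eqVneq z x) => // zx; rewrite -zx zs in xs.
  - apply/allP => z zs; rewrite ffunE; case: (eqVneq z x) => zx.
      by rewrite -zx zs in xs.
    exact: (allP As).
move=> g; rewrite inE => /andP[/andP[/forallP Hg ug] /allP Ag].
have -> : [set f in N (x :: s) | upd f x x == g] =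
          (upd g x) @: [set y in Q | y \notin map g s].
  apply/setP => f; apply/idP/imsetP.
    rewrite !inE /= => /andP[/andP[/andP[/forallP Hf /andP[fxs us]] /andP[fx As]] /eqP fg].
    have Hfg : forall z, z != x -> f z = g z.
      by move=> z zx; rewrite -fg ffunE (negbTE zx).
    have mapfg : map f s = map g s.
      by apply/eq_in_map => z zs; apply: Hfg; apply: contraNneq xs => <-.
    exists (f x); first by rewrite inE -SxQ fx -mapfg fxs.
    by apply/ffunP => z; rewrite ffunE; case: (eqVneq z x) => [->|zx] //; rewrite Hfg.
  move=> [y]; rewrite inE => /andP[yQ ygs] ->.
  have mapfg : map (upd g x y) s = map g s.
    by apply/eq_in_map => z zs; rewrite ffunE; case: (eqVneq z x) => // zx; rewrite -zx zs in xs.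
  rewrite !inE /= mapfg ug !ffunE eqxx ygs SxQ yQ /= andbT.
  apply/andP; split; [apply/andP; split|].
  - apply/forallP => z; apply/implyP; rewrite inE negb_or => /andP[zx zs].
    by rewrite ffunE (negbTE zx); exact: (implyP (Hg z) zs).
  - apply/allP => z zs; rewrite ffunE; case: (eqVneq z x) => zx; first by rewrite -zx zs in xs.
    exact: Ag.
  - apply/eqP/ffunP => z; rewrite !ffunE; case: (eqVneq z x) => [->|//].
    by apply/esym/eqP; exact: (implyP (Hg x) xs).
rewrite card_imset; last first.
  by move=> y1 y2 /ffunP /(_ x); rewrite !ffunE eqxx.
have -> : [set y in Q | y \notin map g s] = Q :\: [set y in map g s].
  by apply/setP => y; rewrite !inE andbC.
rewrite cardsD; congr (_ - _).
have -> : Q :&: [set y in map g s] = [set y in filter (mem Q) (map g s)].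
  by apply/setP => y; rewrite !inE mem_filter.
rewrite cardsE; move/card_uniqP: (filter_uniq (mem Q) ug) => ->.
rewrite size_filter count_map; apply: eq_in_count => z zs /=.
have gz := Ag z zs.
case Pz: (P z).
  by rewrite (subsetP (HP z zs Pz)).
exact: (disjointFr (HnP z zs (negbT Pz)) gz).
Qed.

Lemma N_cat s1 s2 (Q : {set T}) (P : pred T) :
  uniq (s1 ++ s2) ->
  (forall x, x \in s1 -> S x = Q) ->
  (forall x, x \in s1 -> P x) ->
  (forall z, z \in s2 -> P z -> S z \subset Q) ->
  (forall z, z \in s2 -> ~~ P z -> [disjoint S z & Q]) ->
  #|N (s1 ++ s2)| = (#|Q| - count P s2) ^_ (size s1) * #|N s2|.
Proof.
elim: s1 => [|x s1 IH] /=; first by rewrite mul1n.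
move=> /andP[xs u] HS HPs HP HnP.
have HS' : forall y, y \in s1 -> S y = Q by move=> y ys; apply: HS; rewrite inE ys orbT.
have HPs' : forall y, y \in s1 -> P y by move=> y ys; apply: HPs; rewrite inE ys orbT.
rewrite (N_cons (Q := Q) (P := P)) //; last 3 first.
- by apply: HS; rewrite inE eqxx.
- move=> z; rewrite mem_cat => /orP[zs1 _|]; last exact: HP.
  by rewrite HS'.
- move=> z; rewrite mem_cat => /orP[zs1|]; last exact: HnP.
  by rewrite HPs'.
rewrite IH // ffactnSr count_cat (eq_in_count (a2 := predT)) ?count_predT //.
by rewrite addnC subnDA mulnCA mulnA.
Qed.

End N.

Lemma cardI n a b (X : {set 'I_n}) :
  (forall i : 'I_n, (i \in X) = (a <= i < b)) -> #|X| = minn b n - a.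
Proof.
move=> H; rewrite -sum1_card big_mkcond /=.
rewrite (eq_bigr (fun i : 'I_n => nat_of_bool (a <= i < b))); last first.
  by move=> i _; rewrite H; case: ifP.
rewrite -(big_mkord xpredT (fun i => nat_of_bool (a <= i < b))).
elim: n {X H} => [|n IH]; first by rewrite big_geq //; lia.
rewrite big_nat_recr //= IH.
case: (leqP a n) => an; case: (ltnP n b) => nb /=; lia.
Qed.

Lemma perm_pres (T : finType) (p : {perm T}) (X : {set T}) :
  (p @: X == X) = [forall i in X, p i \in X].
Proof.
rewrite eqEcard card_imset ?leqnn ?andbT; last exact: perm_inj.
apply/subsetP/forall_inP => H.
- by move=> i iX; apply: H; apply: imset_f.
- by move=> _ /imsetP[i iX ->]; exact: H i iX.
Qed.

Lemma shuffle a b c d e f : a * (b * (c * d * (e * f))) = e * f * c * d * a * b.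
Proof. lia. Qed.

Theorem lemma4 (n m k : nat) (V W : {set 'I_n}) :
  0 < n -> m <= n./2 -> k <= m ->
  V \subset firstk n k -> W \subset Omega1 n m k ->
  #|[set p in rowgroup n k |
      W == [set i in Omega n m | p i \notin Omega n m :|: V]]| =
  'C(n - m - #|V|, #|W|) * #|W|`! *
  'C(m - k + #|V|, m - k - #|W|) * (m - k - #|W|)`! * k`! * (n - m)`!.
Proof.
move=> n0 mn km HV HW.
have HVi : forall j, j \in V -> j < k.
  by move=> j /(subsetP HV); rewrite /firstk inE /=; lia.
have HWi : forall j, j \in W -> (n - m <= j) && (j < n - k).
  by move=> j /(subsetP HW); rewrite /Omega1 inE /=; lia.
set r1 := row1 n k; set r2 := row2 n k; set Om := Omega n m; set O1 := Omega1 n m k.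
set L := [set i : 'I_n | i < n - m].
set A := L :\: V.
set B := O1 :|: V.
set S := fun i : 'I_n => if i \in r2 then r2 else if i \in W then A
                         else if i \in O1 then B else r1.
have mr1 i : (i \in r1) = (i < n - k) by rewrite /r1 /row1 inE.
have mr2 i : (i \in r2) = (n - k <= i) by rewrite /r2 /row2 inE /=; apply/idP/idP; lia.
have mOm i : (i \in Om) = (n - m <= i) by rewrite /Om /Omega inE /=; apply/idP/idP; lia.
have mO1 i : (i \in O1) = (n - m <= i < n - k) by rewrite /O1 /Omega1 inE /=; apply/idP/idP; lia.
have mL i : (i \in L) = (i < n - m) by rewrite /L inE.
have HWi' j : (j \in W) ==> ((n - m <= j) && (j < n - k)) by apply/implyP; apply: HWi.
have HVi' j : (j \in V) ==> (j < k) by apply/implyP; apply: HVi.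
have Sdef i j : (j \in S i) = if n - k <= i then n - k <= j
    else if i \in W then (j < n - m) && (j \notin V)
    else if n - m <= i then (n - m <= j < n - k) || (j \in V) else j < n - k.
  rewrite /S mr2; case: (leqP (n - k) i) => h1; first exact: mr2.
  case: (i \in W); first by rewrite in_setD mL andbC.
  rewrite mO1 h1 andbT; case: ifP => h2; first by rewrite in_setU mO1.
  exact: mr1.
have key : forall p : 'S_n,
    (p \in rowgroup n k) && (W == [set i in Om | p i \notin Om :|: V])
    = [forall i, p i \in S i].
  move=> p; rewrite /rowgroup inE -/r1 -/r2 !perm_pres.
  apply/idP/forallP.
    move=> /andP[/andP[/forall_inP P1 /forall_inP P2] /eqP WE] i.
    have WEi : (i \in W) = (i \in [set i in Om | p i \notin Om :|: V]) by rewrite -WE.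
    move: (P1 i) (P2 i) (HWi' i) (HVi' (p i)) WEi; rewrite Sdef !inE /=.
    case: (i \in W); case: (p i \in V); rewrite /=; repeat (case: ifP => ?); lia.
  move=> H.
  apply/andP; split; first (apply/andP; split; apply/forall_inP => i).
  - move: (H i) (HWi' i) (HVi' (p i)); rewrite Sdef !inE /=.
    case: (i \in W); case: (p i \in V); rewrite /=; repeat (case: ifP => ?); lia.
  - move: (H i) (HWi' i) (HVi' (p i)); rewrite Sdef !inE /=.
    case: (i \in W); case: (p i \in V); rewrite /=; repeat (case: ifP => ?); lia.
  apply/eqP/setP => i.
  move: (H i) (HWi' i) (HVi' (p i)); rewrite Sdef !inE /=.
  case: (i \in W); case: (p i \in V); rewrite /=; repeat (case: ifP => ?); lia.
set R := r1 :\: O1.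
set O := O1 :\: W.
set s := enum r2 ++ (enum R ++ (enum O ++ enum W)).
have memS z : z \in s.
  rewrite !mem_cat !mem_enum !in_setD mr1 mr2 mO1.
  move: (HWi' z); case: (z \in W) => /=; lia.
have cr2 : #|r2| = k.
  rewrite (@cardI n (n - k) n) ?minnn; first lia.
  by move=> i; rewrite mr2 ltn_ord andbT.
have cR : #|R| = n - m.
  rewrite (@cardI n 0 (n - m)); first lia.
  by move=> i; rewrite in_setD mO1 mr1 /=; apply/idP/idP; lia.
have cO1 : #|O1| = m - k.
  rewrite (@cardI n (n - m) (n - k)); first lia.
  by move=> i; rewrite mO1.
have cO : #|O| = m - k - #|W| by rewrite cardsD (setIidPr HW) cO1.
have cL : #|L| = n - m.
  rewrite (@cardI n 0 (n - m)); first lia.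
  by move=> i; rewrite mL.
have VL : V \subset L by apply/subsetP => j /HVi; rewrite mL; lia.
have cA : #|A| = n - m - #|V| by rewrite cardsD (setIidPr VL) cL.
have O1V : O1 :&: V = set0.
  apply/setP => j; rewrite in_setI mO1 in_set0.
  by move: (HVi' j); case: (j \in V) => /=; lia.
have cB : #|B| = m - k + #|V| by rewrite cardsU O1V cards0 cO1 subn0.
have cW : #|W| <= m - k by rewrite -cO1; apply: subset_leq_card.
have us : uniq s.
  apply/card_uniqP.
  rewrite !size_cat -!cardE cr2 cR cO.
  rewrite (@eq_card _ _ (mem 'I_n)); last by move=> z; rewrite memS.
  rewrite card_ord; lia.
have Ns : #|[set p in rowgroup n k |
      W == [set i in Omega n m | p i \notin Omega n m :|: V]]| = #|N S s|.
  have inj : injective (fun p : 'S_n => [ffun i => p i]).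
    move=> p q /ffunP H; apply/permP => i; move: (H i); by rewrite !ffunE.
  rewrite -(card_imset _ inj); apply: eq_card => f; apply/imsetP/idP.
    move=> [p]; rewrite inE -/Om key => /forallP Hp ->.
    rewrite inE; apply/andP; split; first (apply/andP; split).
    - by apply/forallP => z; rewrite memS.
    - by rewrite (eq_map (g := p)) ?map_inj_uniq //; [exact: perm_inj| move=> z; rewrite ffunE].
    - by apply/allP => z _; rewrite ffunE.
  rewrite inE => /andP[/andP[_ uf] /allP Af].
  have Pe : perm_eq s (enum 'I_n).
    by apply: uniq_perm => //; [exact: enum_uniq| move=> z; rewrite memS mem_enum].
  have finj : injective f.
    apply/injectiveP; rewrite /injectiveb /dinjectiveb.
    by rewrite -(perm_uniq (perm_map f Pe)).
  exists (perm finj).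
    rewrite inE -/Om key; apply/forallP => i; rewrite permE; exact: Af i (memS i).
  by apply/ffunP => i; rewrite ffunE permE.
rewrite Ns.
have Ssub : forall z, z \notin r2 -> S z \subset r1.
  move=> z z2; rewrite /S (negbTE z2).
  case: ifP => _.
    by apply/subsetP => j; rewrite in_setD mL mr1 => /andP[_]; lia.
  case: ifP => _; last exact: subxx.
  apply/subsetP => j; rewrite in_setU mO1 mr1 => /orP[|/HVi]; lia.
have D12 : [disjoint r1 & r2].
  rewrite -setI_eq0; apply/eqP/setP => j; rewrite in_setI mr1 mr2 in_set0; lia.
have DAB : [disjoint A & B].
  rewrite -setI_eq0; apply/eqP/setP => j; rewrite in_setI in_setD in_setU mL mO1 in_set0.
  by case: (j \in V); rewrite /= ?andbF ?orbT //; lia.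
have notin2 : forall z, z \in enum R ++ (enum O ++ enum W) -> z \notin r2.
  move=> z; rewrite !mem_cat !mem_enum !in_setD mr1 mr2 mO1.
  by move: (HWi' z); case: (z \in W) => /=; lia.
have us1 : uniq (enum R ++ (enum O ++ enum W)) by move: us; rewrite cat_uniq => /and3P[].
have us2 : uniq (enum O ++ enum W) by move: us1; rewrite cat_uniq => /and3P[].
have us3 : uniq (enum W ++ [::]) by rewrite cats0 enum_uniq.
rewrite (N_cat (Q := r2) (P := fun z => z \in r2)) //; first last.
- by move=> z /notin2 H _; apply: disjointWl (Ssub z H) D12.
- by move=> z /notin2 /negP H /H.
- by move=> x; rewrite mem_enum.
- by move=> x; rewrite mem_enum /S => ->.
have S2a : forall x, x \in enum R -> S x = r1.
  move=> x; rewrite mem_enum in_setD mO1 mr1 => /andP[xO x1].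
  rewrite /S mr2; have -> : (n - k <= x) = false by rewrite leqNgt x1.
  have -> : (x \in W) = false.
    by apply/negbTE; apply/negP => /HWi H; rewrite H in xO.
  by rewrite mO1 (negbTE xO).
have S2b : forall z, z \in enum O ++ enum W -> predT z -> S z \subset r1.
  move=> z zs _; apply: Ssub; apply: notin2; by rewrite mem_cat zs orbT.
have S2c : forall z, z \in enum O ++ enum W -> ~~ predT z -> [disjoint S z & r1].
  by move=> z _ /negP.
rewrite (N_cat (Q := r1) (P := predT) us1 S2a (fun _ _ => isT) S2b S2c).
rewrite -(cats0 (enum W)).
have S3a : forall x, x \in enum O -> S x = B.
  move=> x; rewrite mem_enum in_setD mO1 => /andP[xW xO].
  rewrite /S mr2; have -> : (n - k <= x) = false.
    by move/andP: xO => [_ h]; rewrite leqNgt h.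
  by rewrite (negbTE xW) mO1 xO.
have S3b : forall x, x \in enum O -> x \notin W.
  by move=> x; rewrite mem_enum in_setD => /andP[].
have S3c : forall z, z \in enum W ++ [::] -> z \notin W -> S z \subset B.
  by move=> z; rewrite mem_cat mem_enum orbF => ->.
have S3d : forall z, z \in enum W ++ [::] -> ~~ (z \notin W) -> [disjoint S z & B].
  move=> z; rewrite mem_cat mem_enum orbF negbK => zW _.
  rewrite /S mr2; have -> : (n - k <= z) = false.
    by have /andP[_ h] := HWi z zW; rewrite leqNgt h.
  by rewrite zW.
have us2' : uniq (enum O ++ (enum W ++ [::])) by rewrite cats0.
rewrite (N_cat (Q := B) (P := fun z => z \notin W) us2' S3a S3b S3c S3d).
have S4a : forall x, x \in enum W -> S x = A.
  move=> x; rewrite mem_enum => xW.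
  rewrite /S mr2; have -> : (n - k <= x) = false.
    by have /andP[_ h] := HWi x xW; rewrite leqNgt h.
  by rewrite xW.
have S4b : forall z : 'I_n, z \in [::] -> predT z -> S z \subset A by [].
have S4c : forall z : 'I_n, z \in [::] -> ~~ predT z -> [disjoint S z & A] by [].
rewrite (N_cat (Q := A) (P := predT) us3 S4a (fun _ _ => isT) S4b S4c).
have cr1 : #|r1| = n - k.
  rewrite (@cardI n 0 (n - k)); first by move: mn; clear; lia.
  by move=> i; rewrite mr1.
rewrite Nnil muln1 !cats0.
rewrite (eq_in_count (a2 := pred0) (s := enum R ++ _)); last first.
  by move=> z /notin2 /negbTE.
rewrite (eq_in_count (a2 := pred0) (s := enum W)); last first.
  by move=> z; rewrite mem_enum => ->.
rewrite !count_pred0 count_predT /= !subn0 size_cat -!cardE cr2 cr1 cO cA cB.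
have -> : n - k - (m - k - #|W| + #|W|) = n - m by move: cW km mn; clear; lia.
rewrite cR !ffactnn -!bin_ffact.
exact: shuffle.
Qed.
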